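(* Let $\rho$ be a representation of $D^{2,2,2}$ and let $\{i,j,k\}=\{1,2,3\}$. Then, as linear maps $X^3_0\to X^0_0$, $$\varphi^{(0)}_i\circ\varphi^{(1)}_j\circ\varphi^{(2)}_i+\varphi^{(0)}_i\circ\varphi^{(1)}_k\circ\varphi^{(2)}_i=0 \qquad\text{and}\qquad \varphi^{(0)}_i\circ\varphi^{(1)}_i\circ\varphi^{(2)}_i=0.$$ Consequently, $\varphi^{(0)}_i\varphi^{(1)}_j\varphi^{(2)}_i(B)=\varphi^{(0)}_i\varphi^{(1)}_k\varphi^{(2)}_i(B)$ for every subspace $B\subseteq X^3_0$.
   Context: $D^{2,2,2}$ is the modular lattice generated by $x_1,y_1,x_2,y_2,x_3,y_3$ subject only to $x_i\subseteq y_i$ ($i=1,2,3$), with a greatest element $I$ adjoined. A representation $\rho$ of $D^{2,2,2}$ in a finite-dimensional vector space $X_0$ is a lattice morphism from $D^{2,2,2}$ to the subspace lattice of $X_0$, with $\rho(I)=X_0$. Write $X_i=\rho(x_i)\subseteq Y_i=\rho(y_i)$. Coxeter functor: put $R=Y_1\oplus Y_2\oplus Y_3$ and $X^1_0=\{(\eta_1,\eta_2,\eta_3)\in R:\sum\eta_i=0\}$. Let $G'_i\subseteq R$ be the triples with $i$-th coordinate in $X_i$, and $H'_i\subseteq R$ the triples with $i$-th coordinate $0$. $\Phi^+\rho$ is the representation in $X^1_0$ with $\Phi^+\rho(y_i)=G'_i\cap X^1_0$, $\Phi^+\rho(x_i)=H'_i\cap X^1_0$, $\Phi^+\rho(I)=X^1_0$.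 Iterates: let $X^n_0$ be the space of $(\Phi^+)^n\rho$, with $X^0_0=X_0$. Let $\varphi^{(n)}_i:X^{n+1}_0\to X^n_0$ be the map $(\eta_1,\eta_2,\eta_3)\mapsto\eta_i$ obtained by applying the construction to $(\Phi^+)^n\rho$. *)

(* Defs.v *)
From HB Require Import structures.
From mathcomp Require Import all_boot all_order all_algebra.
Set Implicit Arguments. Unset Strict Implicit. Unset Printing Implicit Defensive.
Import GRing.Theory.
Local Open Scope ring_scope.
Local Open Scope vspace_scope.

(* Triples (eta_1, eta_2, eta_3) of vectors of V, coordinates indexed by 'I_3
   (index 0,1,2 stand for the paper's 1,2,3). *)
Definition T3 (K : fieldType) (V : vectType K) : vectType K := (V * V * V)%type.

Definition coord3 (K : fieldType) (V : vectType K) (i : 'I_3) (t : T3 V) : V :=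
  if val i == 0%N then t.1.1 else if val i == 1%N then t.1.2 else t.2.

Definition inj3 (K : fieldType) (V : vectType K) (i : 'I_3) (v : V) : T3 V :=
  if val i == 0%N then (v, 0%R, 0%R) else if val i == 1%N then (0%R, v, 0%R) else (0%R, 0%R, v).

Definition proj3 (K : fieldType) (V : vectType K) (i : 'I_3) : 'Hom(T3 V, V) :=
  linfun (coord3 i).
Definition emb3 (K : fieldType) (V : vectType K) (i : 'I_3) : 'Hom(V, T3 V) :=
  linfun (inj3 i).
Definition sum3 (K : fieldType) (V : vectType K) : 'Hom(T3 V, V) :=
  linfun (fun t : T3 V => (t.1.1 + t.1.2 + t.2)%R).

Arguments proj3 {K} V i.
Arguments emb3 {K} V i.
Arguments sum3 {K} V.

(* A representation of D^{2,2,2}: the space X_0 (a subspace of an ambient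
   finite-dimensional space V) together with subspaces X_i, Y_i. *)
Record rep (K : fieldType) (V : vectType K) := Rep {
  rX0 : {vspace V};
  rX : 'I_3 -> {vspace V};
  rY : 'I_3 -> {vspace V} }.

(* Since subspace lattices are modular, lattice morphisms D^{2,2,2} -> L(X_0)
   with I |-> X_0 correspond exactly to data X_i <= Y_i <= X_0. *)
Definition is_rep (K : fieldType) (V : vectType K) (r : rep V) : Prop :=
  forall i, (rX r i <= rY r i)%VS /\ (rY r i <= rX0 r)%VS.

Definition Rsum (K : fieldType) (V : vectType K) (r : rep V) : {vspace T3 V} :=
  (\sum_(i < 3) (emb3 V i @: rY r i))%VS.

Definition CoxPlus (K : fieldType) (V : vectType K) (r : rep V) : rep (T3 V) :=
  let R := Rsum r in
  let X10 := (R :&: lker (sum3 V))%VS in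
  {| rX0 := X10;
     rY := fun i => ((R :&: (proj3 V i @^-1: rX r i)) :&: X10)%VS;
     rX := fun i => ((R :&: lker (proj3 V i)) :&: X10)%VS |}.

(* Main.v *)
Require Import Defs.
From HB Require Import structures.
From mathcomp Require Import all_boot all_order all_algebra.
Import GRing.Theory.
Local Open Scope ring_scope.
Section S.
Variables (K : fieldType) (V : vectType K).
Lemma coord3_lin (i : 'I_3) : linear (@coord3 K V i).
Proof. by move=> a x y; rewrite /coord3; case: ifP => _ //; case: ifP. Qed.
Lemma inj3_lin (i : 'I_3) : linear (@inj3 K V i).
Proof. move=> a x y; rewrite /inj3; case: ifP => _; last case: ifP => _;
  by congr (_, _, _); rewrite /= ?scaler0 ?addr0 ?add0r. Qed.
Definition s3f (t : T3 V) : V := (t.1.1 + t.1.2 + t.2)%R.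
Lemma sum3_lin : linear s3f.
Proof. move=> a x y; rewrite /s3f /= !scalerDr.
by rewrite [X in X + (_ + _) = _]addrACA (addrACA (_ + _) _ (a *: x.2)). Qed.
HB.instance Definition _ (i : 'I_3) := GRing.isLinear.Build K (T3 V) V _ (@coord3 K V i) (coord3_lin i).
HB.instance Definition _ (i : 'I_3) := GRing.isLinear.Build K V (T3 V) _ (@inj3 K V i) (inj3_lin i).
HB.instance Definition _ := GRing.isLinear.Build K (T3 V) V _ s3f sum3_lin.
Lemma proj3E i t : proj3 V i t = coord3 i t. Proof. exact: lfunE. Qed.
Lemma emb3E i t : emb3 V i t = inj3 i t. Proof. exact: lfunE. Qed.
Lemma sum3E t : sum3 V t = t.1.1 + t.1.2 + t.2. Proof. exact: (lfunE s3f). Qed.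
Lemma pe (i l : 'I_3) (y : V) : proj3 V i (emb3 V l y) = if i == l then y else 0.
Proof. rewrite proj3E emb3E /coord3 /inj3.
by case: i => [[|[|[|n]]] Hi] //; case: l => [[|[|[|m]]] Hl] //. Qed.
Lemma sum_proj (Ys : 'I_3 -> {vspace V}) v i :
  v \in (\sum_(l < 3) (emb3 V l @: Ys l))%VS -> proj3 V i v \in Ys i.
Proof.
move/memv_sumP => [vs Hvs ->]; rewrite linear_sum (bigD1 i) //= big1 => [|l Hl].
  by rewrite addr0; have [u Hu ->] := memv_imgP (Hvs i isT); rewrite pe eqxx.
by have [u _ ->] := memv_imgP (Hvs l isT); rewrite pe eq_sym (negbTE Hl).
Qed.
Lemma sum3_perm (i j k : 'I_3) (t : T3 V) : i != j -> j != k -> i != k ->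
  proj3 V i t + proj3 V j t + proj3 V k t = sum3 V t.
Proof.
rewrite !proj3E sum3E /coord3.
case: i => [[|[|[|n]]] Hi] //; case: j => [[|[|[|m]]] Hj] //;
  case: k => [[|[|[|p]]] Hk] //= _ _ _;
first [ done | by rewrite addrAC | by rewrite [LHS]addrC addrA
      | by rewrite [X in X + _ = _]addrC | by rewrite [LHS]addrC addrA addrAC
      | by rewrite addrAC [LHS]addrC addrA addrAC ].
Qed.
End S.

Theorem mainTheorem15 (K : fieldType) (V : vectType K) (r : rep V)
  (hr : is_rep r) (i j k : 'I_3) (hij : i != j) (hjk : j != k) (hik : i != k) :
  let X3 := rX0 (CoxPlus (CoxPlus (CoxPlus r))) in
  let phi0 := fun l : 'I_3 => proj3 V l in
  let phi1 := fun l : 'I_3 => proj3 (T3 V) l in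
  let phi2 := fun l : 'I_3 => proj3 (T3 (T3 V)) l in
  [/\ (forall v, v \in X3 ->
         phi0 i (phi1 j (phi2 i v)) + phi0 i (phi1 k (phi2 i v)) = 0),
      (forall v, v \in X3 -> phi0 i (phi1 i (phi2 i v)) = 0)
    & (forall B : {vspace T3 (T3 (T3 V))}, (B <= X3)%VS ->
         ((phi0 i \o phi1 j \o phi2 i) @: B)%VS
         = ((phi0 i \o phi1 k \o phi2 i) @: B)%VS)].
Proof.
move=> X3 phi0 phi1 phi2.
have key : forall v, v \in X3 ->
    phi0 i (phi1 i (phi2 i v)) = 0 /\ sum3 (T3 V) (phi2 i v) = 0.
  move=> v; rewrite /X3 /= memv_cap => /andP [/(fun h => sum_proj _ _ _ _ i h) Hw _].
  move: Hw; rewrite /= !memv_cap -memv_preim !memv_cap !memv_ker.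
  by case/andP => /andP [_ /andP [/andP [_ /eqP ->] _]] /andP [_ /eqP ->].
have P1 : forall v, v \in X3 ->
    phi0 i (phi1 j (phi2 i v)) + phi0 i (phi1 k (phi2 i v)) = 0.
  move=> v /key [H1 H2].
  by rewrite -[LHS]add0r -{1}H1 addrA -!linearD /= sum3_perm // H2 linear0.
split => // [v /key [] //|B HB].
have E : forall b, b \in B -> (phi0 i \o phi1 j \o phi2 i)%VF b
                  = (phi0 i \o phi1 k \o phi2 i)%VF (- b).
  move=> b Hb; rewrite !comp_lfunE !linearN /=; apply/eqP.
  by rewrite -subr_eq0 opprK P1 //; apply: (subvP HB).
apply/eqP; rewrite eqEsubv; apply/andP; split; apply/subvP => x /memv_imgP [b Hb ->].
  by rewrite E //; apply: memv_img; rewrite memvN.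
by rewrite -[b]opprK -E ?memvN //; apply: memv_img; rewrite memvN.
Qed.
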